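(* Let $m\in\mathbb N$ and let $t$ be a finite rooted ordered tree with $\dim(t)=2m$. Then there are trees $t',t_1,\dots,t_n$ with $\dim(t'),\dim(t_1),\dots,\dim(t_n)\le m$ such that $t=t'[t_1,\dots,t_n]$.
   Context: The dimension of a finite rooted ordered tree is defined inductively: (i) if $t$ has no children, $\dim(t)=0$; (ii) if $t$ has exactly one child $t_1$, $\dim(t)=\dim(t_1)$; (iii) if $t$ has at least two children, let $t_1,t_2$ be children of highest dimension, i.e. $\dim(t_1)\ge\dim(t_2)$ and $\dim(t_2)\ge\dim(t'')$ for every child $t''\ne t_1$; then $\dim(t)=\dim(t_1)+1$ if $\dim(t_1)=\dim(t_2)$, and $\dim(t)=\dim(t_1)$ if $\dim(t_1)>\dim(t_2)$. If $t'$ is a tree with leaves $l_1,\dots,l_n$ (from left to right) and $t_1,\dots,t_n$ are trees, $t'[t_1,\dots,t_n]$ denotes the tree obtained from $t'$ by replacing each leaf $l_i$ with $t_i$. *)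

(* Defs.v *)
From mathcomp Require Import all_boot.
Set Implicit Arguments. Unset Strict Implicit. Unset Printing Implicit Defensive.

Inductive tree : Type := Node of list tree.

Definition dim_of_children (ds : seq nat) : nat :=
  match sort geq ds with
  | [::] => 0
  | [:: d] => d
  | d1 :: d2 :: _ => if d1 == d2 then d1.+1 else d1
  end.

Fixpoint dim (t : tree) : nat :=
  match t with Node cs => dim_of_children (map dim cs) end.

Fixpoint nleaves (t : tree) : nat :=
  match t with
  | Node [::] => 1
  | Node cs => sumn (map nleaves cs)
  end.

(* Replace the leaves of t, from left to right, by the trees of ts;
   returns the new tree and the unused trees. *)
Fixpoint subst_aux (t : tree) (ts : seq tree) : tree * seq tree :=
  match t with
  | Node [::] =>
      match ts with
      | [::] => (t, [::])
      | u :: ts' => (u, ts')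
      end
  | Node cs =>
      let fix go (cs : list tree) (ts : seq tree) : list tree * seq tree :=
        match cs with
        | [::] => ([::], ts)
        | c :: cs' =>
            let (c', ts1) := subst_aux c ts in
            let (cs'', ts2) := go cs' ts1 in (c' :: cs'', ts2)
        end in
      let (cs', ts') := go cs ts in (Node cs', ts')
  end.

(* t'[t_1,...,t_n] (meaningful when n = nleaves t'). *)
Definition subst (t' : tree) (ts : seq tree) : tree := (subst_aux t' ts).1.

(* Main.v *)
Require Import Defs.
From mathcomp Require Import all_boot.
From mathcomp Require Import zify.

Lemma D_le k ds : (dim_of_children ds <= k) =
  all (fun d => d <= k) ds && (count (pred1 k) ds <= 1).
Proof.
have P : perm_eq (sort geq ds) ds by rewrite perm_sort.
rewrite -(perm_all _ P) -(permP P) /dim_of_children.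
have S : sorted geq (sort geq ds) by apply: sort_sorted => x y; apply: leq_total.
move: S; case: (sort geq ds) => [|d1 [|d2 r]] //=.
  by move=> _; case: (d1 <= k) (@eqP _ d1 k) => [] []; lia.
move=> /andP [H12 Hp].
have Hr : all (geq d2) r.
  apply: order_path_min Hp => x y z h1 h2; exact: leq_trans h2 h1.
have ak : d2 <= k -> all (fun d => d <= k) r.
  by move=> h; apply/allP => y /(allP Hr) /= hy; lia.
have ck : d2 < k -> count (pred1 k) r = 0.
  move=> h; apply/eqP; rewrite -leqn0 leqNgt -has_count; apply/hasPn => y /(allP Hr) /= hy.
  by apply/eqP; lia.
case: (leqP d2 k) => h2.
  rewrite (ak h2) andbT.
  case: (ltnP d2 k) => h2'.
    rewrite (ck h2').
    case: eqP => e1; case: eqP => e2; case: eqP => e3; lia.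
  have e : d2 = k by lia.
  subst d2. case: eqP => e1; case: eqP => e2; rewrite ?eqxx /=; lia.
rewrite andbF /=; case: eqP => e1; case: (leqP d1 k); lia.
Qed.

Lemma key m (ds es : seq nat) :
  all2 (fun e d => e <= d - m) es ds -> m < dim_of_children ds ->
  dim_of_children es <= dim_of_children ds - m.
Proof.
set n := dim_of_children ds => A hm.
have /andP [Al Cn] : all (fun d => d <= n) ds && (count (pred1 n) ds <= 1) by rewrite -D_le.
clearbody n.
rewrite D_le.
suff [h1 h2] : all (fun d => d <= n - m) es /\ count (pred1 (n - m)) es <= count (pred1 n) ds.
  by rewrite h1 /=; apply: leq_trans h2 Cn.
elim: es ds A Al {Cn} => [|e es IH] [|d ds] //= /andP [h A] /andP [hd Al].
have [IH1 IH2] := IH ds A Al.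
split; first by rewrite IH1 andbT; lia.
apply: leq_add IH2.
case: eqP => // E; case: eqP => //; lia.
Qed.

Fixpoint tree_ind' (P : tree -> Prop)
  (H : forall cs, foldr (fun c acc => P c /\ acc) True cs -> P (Node cs)) t : P t :=
  match t with Node cs => H cs ((fix f (l : seq tree) : foldr (fun c acc => P c /\ acc) True l :=
     match l return foldr (fun c acc => P c /\ acc) True l
     with [::] => I | c :: l' => conj (tree_ind' P H c) (f l') end) cs) end.

Fixpoint cut m (t : tree) : tree * seq tree :=
  if dim t <= m then (Node [::], [:: t]) else
  match t with Node cs =>
    (Node (map (fun c => (cut m c).1) cs), flatten (map (fun c => (cut m c).2) cs)) end.

Fixpoint go (cs : list tree) (ts : seq tree) : list tree * seq tree :=
  match cs with
  | [::] => ([::], ts)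
  | c :: cs' =>
      let (c', ts1) := subst_aux c ts in
      let (cs'', ts2) := go cs' ts1 in (c' :: cs'', ts2)
  end.

Lemma subst_aux_node c cs ts :
  subst_aux (Node (c :: cs)) ts = let (cs', ts') := go (c :: cs) ts in (Node cs', ts').
Proof. reflexivity. Qed.

Lemma nleavesN cs : 0 < size cs -> nleaves (Node cs) = sumn (map nleaves cs).
Proof. by case: cs. Qed.

Lemma dimN cs : dim (Node cs) = dim_of_children (map dim cs).
Proof. by []. Qed.

Lemma cut_prop m t :
  (forall rest, subst_aux (cut m t).1 ((cut m t).2 ++ rest) = (t, rest)) /\
  size (cut m t).2 = nleaves (cut m t).1 /\
  all (fun u => dim u <= m) (cut m t).2 /\
  dim (cut m t).1 <= dim t - m.
Proof.
elim/tree_ind': t => cs IH.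
rewrite [cut m _]/=.
case: ifP => hd.
  by rewrite /= hd; split.
case: cs IH hd => [|c cs] IH hd; first by [].
have hd' : m < dim (Node (c :: cs)) by rewrite dimN ltnNge hd.
set l := c :: cs in IH hd hd' *.
cbn [fst snd].
split; last split; last split.
- move=> rest; rewrite subst_aux_node.
  suff -> : go (map (fun c => (cut m c).1) l) (flatten (map (fun c => (cut m c).2) l) ++ rest) = (l, rest) by [].
  elim: (l) IH {hd hd'} => [|x xs IHx]; first by [].
  move=> [H1 H2]; have IH2 := IHx H2; case: H1 => Hx [_ [_ _]] /=.
  by rewrite -catA Hx IH2.
- rewrite nleavesN //.
  elim: (l) IH {hd hd'} => [|x xs IHx]; first by [].
  move=> [H1 H2]; have IH2 := IHx H2; case: H1 => _ [Hx [_ _]] /=.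
  by rewrite size_cat Hx IH2.
- elim: (l) IH {hd hd'} => [|x xs IHx]; first by [].
  move=> [H1 H2]; have IH2 := IHx H2; case: H1 => _ [_ [Hx _]] /=.
  by rewrite all_cat Hx IH2.
- rewrite dimN [dim (Node l)]dimN.
  apply: key; last by rewrite -dimN.
  elim: (l) IH {hd hd'} => [|x xs IHx]; first by [].
  move=> [H1 H2]; have IH2 := IHx H2; case: H1 => _ [_ [_ Hx]] /=.
  by rewrite Hx IH2.
Qed.

Theorem lemma5 (m : nat) (t : tree) :
  dim t = 2 * m ->
  exists (t' : tree) (ts : seq tree),
    size ts = nleaves t' /\
    dim t' <= m /\
    all (fun u => dim u <= m) ts /\
    t = subst t' ts.
Proof.
move=> hd.
have [H1 [H2 [H3 H4]]] := cut_prop m t.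
exists (cut m t).1, (cut m t).2; split; first by [].
split; first by rewrite hd in H4; lia.
split; first by [].
by rewrite /subst -[(cut m t).2]cats0 H1.
Qed.
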